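(* Let $\eta>0$ and $W\ge0$. Let $x_t^{s}$ ($t\in[T]$, $t-W\le s\le t$) be the iterates of RHGD, and let $x^{(k)}$ be the iterates of offline projected gradient descent $$x_t^{(k)}=\Pi_X\big(x_t^{(k-1)}-\eta\, g_t(x_{t-1}^{(k-1)},x_t^{(k-1)},x_{t+1}^{(k-1)})\big),\quad t\in[T],\ k\ge1,$$ with $x_0^{(k)}=x_0$, both using the same stepsize $\eta$. If $x_t^{(0)}=x_t^{t-W}$ for all $t\in[T]$, then $x_t^{(W)}=x_t^t$ for all $t\in[T]$.
   Context: $X\subseteq\mathbb R^n$ is compact and convex, $\Pi_X$ is Euclidean projection onto $X$, $\beta\ge0$, $x_0\in X$, and $f_1,\dots,f_T:\mathbb R^n\to\mathbb R$ are differentiable. Partial gradients: for $t<T$, $g_t(a,b,c)=\nabla f_t(b)+\beta(2b-a-c)$; for $t=T$, $g_T(a,b,c)=\nabla f_T(b)+\beta(b-a)$, which does not depend on $c$. These are the partial gradients of $C_1^T(x)=\sum_t(f_t(x_t)+\frac\beta2\|x_t-x_{t-1}\|^2)$ with respect to $x_t$. RHGD with window $W$, stepsizes $\gamma,\eta$: - Initialization: $x_1^{1-W}=x_0$, and $x_t^{t-W}=\Pi_X(x_{t-1}^{t-1-W}-\gamma\nabla f_{t-1}(x_{t-1}^{t-1-W}))$ for $2\le t\le T$. - Updates: for $s=t-W+1,\dots,t$, $x_t^s=\Pi_X(x_t^{s-1}-\eta g_t(x_{t-1}^{s-2},x_t^{s-1},x_{t+1}^{s}))$, with the convention $x_0^s=x_0$.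 - Output at stage $t$: $x_t^t$. *)

(* Defs.v *)
From HB Require Import structures.
From mathcomp Require Import all_boot all_order all_algebra.
From mathcomp Require Import all_classical all_reals all_analysis.
Set Implicit Arguments. Unset Strict Implicit. Unset Printing Implicit Defensive.
Import Order.TTheory GRing.Theory Num.Theory.
Import numFieldNormedType.Exports.
Local Open Scope classical_set_scope.
Local Open Scope ring_scope.

Section Defs.
Variables (R : realType) (n : nat).

Definition sqdist (y z : 'rV[R]_n) : R := \sum_(i < n) (y 0 i - z 0 i) ^+ 2.

Definition is_euclid_proj (X : set 'rV[R]_n) (P : 'rV[R]_n -> 'rV[R]_n) : Prop :=
  forall y, X (P y) /\ forall z, X z -> sqdist y (P y) <= sqdist y z.

Definition grad (f : 'rV[R]_n -> R) (x : 'rV[R]_n) : 'rV[R]_n :=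
  \row_(i < n) 'D_(delta_mx 0 i) f x.

(* partial gradients g_t of C_1^T w.r.t. x_t; for t = T the argument c is ignored *)
Definition gpart (T : nat) (beta : R) (f : nat -> 'rV[R]_n -> R) (t : nat)
    (a b c : 'rV[R]_n) : 'rV[R]_n :=
  if (t < T)%N then grad (f t) b + beta *: (2%:R *: b - a - c)
  else grad (f t) b + beta *: (b - a).

End Defs.

(* Main.v *)
Require Import Defs.
From HB Require Import structures.
From mathcomp Require Import all_boot all_order all_algebra.
From mathcomp Require Import all_classical all_reals all_analysis.
From mathcomp Require Import zify.
Import Order.TTheory GRing.Theory Num.Theory.
Import numFieldNormedType.Exports.
Local Open Scope classical_set_scope.
Local Open Scope ring_scope.

Theorem lemma2 (R : realType) (n T W : nat) (X : set 'rV[R]_n)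
  (P : 'rV[R]_n -> 'rV[R]_n) (f : nat -> 'rV[R]_n -> R)
  (beta gamma eta : R) (x0 : 'rV[R]_n)
  (x : nat -> int -> 'rV[R]_n)   (* RHGD iterates: x t s = x_t^s *)
  (y : nat -> nat -> 'rV[R]_n) :  (* offline PGD iterates: y t k = x_t^(k) *)
  compact X -> convex_set X -> is_euclid_proj X P ->
  0 <= beta -> X x0 ->
  (forall t z, differentiable (f t) z) ->
  0 < eta ->
  (* RHGD: convention x_0^s = x0 *)
  (forall s, x 0%N s = x0) ->
  (* RHGD initialization *)
  x 1%N (1 - W%:Z) = x0 ->
  (forall t : nat, (2 <= t <= T)%N ->
     x t (t%:Z - W%:Z) =
       P (x t.-1 (t.-1%:Z - W%:Z)
          - gamma *: grad (f t.-1) (x t.-1 (t.-1%:Z - W%:Z)))) ->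
  (* RHGD updates *)
  (forall (t : nat) (s : int), (1 <= t <= T)%N ->
     t%:Z - W%:Z + 1 <= s <= t%:Z ->
     x t s = P (x t (s - 1)
                - eta *: gpart T beta f t (x t.-1 (s - 2)) (x t (s - 1)) (x t.+1 s))) ->
  (* offline projected gradient descent *)
  (forall k, y 0%N k = x0) ->
  (forall (t k : nat), (1 <= t <= T)%N -> (1 <= k)%N ->
     y t k = P (y t k.-1
                - eta *: gpart T beta f t (y t.-1 k.-1) (y t k.-1) (y t.+1 k.-1))) ->
  (* common initialization *)
  (forall t : nat, (1 <= t <= T)%N -> y t 0%N = x t (t%:Z - W%:Z)) ->
  forall t : nat, (1 <= t <= T)%N -> y t W = x t t%:Z.
Proof.
move=> _ _ _ _ _ _ _ Hx0 _ _ Hx Hy0 Hy Hinit.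
have key : forall k, (k <= W)%N -> forall t, (1 <= t <= T)%N ->
    y t k = x t (t%:Z - W%:Z + k%:Z).
  elim=> [|k IH] hk t ht.
    by rewrite addr0; apply: Hinit.
  have hk' : (k <= W)%N by apply: ltnW.
  rewrite (Hy t k.+1 ht) //= (Hx t (t%:Z - W%:Z + k.+1%:Z) ht); last first.
    by apply/andP; split; lia.
  have e1 : t%:Z - W%:Z + k.+1%:Z - 1 = t%:Z - W%:Z + k%:Z by lia.
  rewrite e1 -(IH hk' t ht).
  have Hm : y t.-1 k = x t.-1 (t%:Z - W%:Z + k.+1%:Z - 2).
    case: t ht {e1} => [|[|t']] ht //.
      by rewrite Hy0 Hx0.
    rewrite (IH hk' t'.+1); last by move: ht; lia.
    congr (x _ _); lia.
  rewrite Hm /gpart; case: ltnP => htT //.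
  rewrite (IH hk' t.+1); last by move: ht htT; lia.
  congr (P (_ - eta *: (_ + beta *: (_ - _ - x _ _)))); lia.
move=> t ht.
by rewrite (key W (leqnn W) t ht) subrK.
Qed.
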